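(* Let $\mathbb{F}$ be an archimedean partially ordered field. Then $\mathbb{F}$ is localizable and the extended Gelfand transformation $\widehat{\cdot}\colon\mathbb{F}\to\mathscr{C}_{\mathrm{a.e.}}(\mathcal{K}(\mathbb{F}))$ is a positive ring morphism and an order embedding.
   Context: All rings are commutative with unit $1$; ring morphisms are unital. A partially ordered commutative ring is a commutative ring $R$ with a partial order $\le$ such that $r\le s$ implies $r+t\le s+t$, and whose positive cone $R^+=\{r:0\le r\}$ is closed under multiplication and contains all squares. A partially ordered field is a partially ordered commutative ring in which every nonzero element is invertible. A ring morphism $\Phi$ is positive if $\Phi(R^+)\subseteq S^+$, an order embedding if it is positive and $\Phi^{-1}(S^+)\subseteq R^+$. $\mathbb{N}=\{1,2,\dots\}$, $\mathbb{N}_0=\mathbb{N}\cup\{0\}$. $R$ is archimedean if $kg+h\in R^+$ for all $k\in\mathbb{N}$ implies $g\in R^+$. $\mathrm{Loc}(R)$ is the set of $s\in1+R^+$ such that $rs\in R^+$ implies $r\in R^+$ for all $r\in R$; $R$ is localizable if every $r$ satisfies $-s\le r\le s$ for some $s\in\mathrm{Loc}(R)$. For a topological space $X$: $\mathscr{C}_{\mathrm{a.e.}}(X)$ is the set of continuous real functions defined on dense open subsets of $X$ modulo $f\approx g$ iff $f,g$ agree on some dense open subset of $\operatorname{dom}f\cap\operatorname{dom}g$, with operations pointwise on the intersection of domains, and order $[f]\le[g]$ iff $f\le g$ pointwise on some dense open subset of $\operatorname{dom}f\cap\operatorname{dom}g$. $R_{\mathrm{loc}}$: fractions $r/s$ ($r\in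 R$, $s\in\mathrm{Loc}(R)$), $r/s=r'/s'$ iff $rs'=r's$, usual operations, $p/q\le r/s$ iff $ps\le rq$. $R^{\mathrm{bd}}_{\mathrm{loc}}=\{a\in R_{\mathrm{loc}}:\exists n\in\mathbb{N}_0,\ -n\le a\le n\}$. $\mathcal{K}(R)$: the ring morphisms $\varphi\colon R^{\mathrm{bd}}_{\mathrm{loc}}\to\mathbb{R}$ with $\varphi(a)\ge0$ for $a\ge0$, with the weak-$*$ topology. $\mathrm{O}_{s<\infty}=\{\varphi\in\mathcal{K}(R):\varphi(1/s)>0\}$ for $s\in\mathrm{Loc}(R)$; for archimedean localizable $R$ these are dense open subsets of $\mathcal{K}(R)$. The extended Gelfand transformation sends $r\in R$ to the class $\widehat r\in\mathscr{C}_{\mathrm{a.e.}}(\mathcal{K}(R))$ of the continuous function $r_s\colon\mathrm{O}_{s<\infty}\to\mathbb{R}$, $\varphi\mapsto\varphi(1/s)^{-1}\varphi(r/s)$, where $s\in\mathrm{Loc}(R)$ is any element with $r/s\in R^{\mathrm{bd}}_{\mathrm{loc}}$ (the class does not depend on $s$). *)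

(* Defs.v *)
From HB Require Import structures.
From mathcomp Require Import all_boot all_order all_algebra.
From mathcomp Require Import all_classical all_reals all_analysis.
Set Implicit Arguments. Unset Strict Implicit. Unset Printing Implicit Defensive.
Import Order.TTheory GRing.Theory Num.Theory numFieldNormedType.Exports.
Local Open Scope classical_set_scope.
Local Open Scope ring_scope.

Section PO.
Variables (R : comPzRingType) (le : R -> R -> Prop).

Definition po_ring : Prop :=
  (forall r, le r r) /\
  (forall r s, le r s -> le s r -> r = s) /\
  (forall r s t, le r s -> le s t -> le r t) /\
  (forall r s t, le r s -> le (r + t) (s + t)) /\
  (forall r s, le 0 r -> le 0 s -> le 0 (r * s)) /\
  (forall r, le 0 (r * r)).

Definition po_field : Prop :=
  po_ring /\ forall r : R, r != 0 -> exists u, r * u = 1.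

Definition archimedean : Prop :=
  forall g h : R, (forall k : nat, le 0 (k.+1%:R * g + h)) -> le 0 g.

Definition Loc (s : R) : Prop :=
  le 0 (s - 1) /\ forall r, le 0 (r * s) -> le 0 r.

Definition localizable : Prop :=
  forall r : R, exists s, Loc s /\ le (- s) r /\ le r s.

Definition frac_eq (a b : R * R) : Prop := a.1 * b.2 = b.1 * a.2.
Definition frac_add (a b : R * R) : R * R := (a.1 * b.2 + b.1 * a.2, a.2 * b.2).
Definition frac_mul (a b : R * R) : R * R := (a.1 * b.1, a.2 * b.2).
Definition frac_le (a b : R * R) : Prop := le (a.1 * b.2) (b.1 * a.2).

Definition bd (a : R * R) : Prop :=
  Loc a.2 /\ exists n : nat, frac_le ((- n%:R), 1) a /\ frac_le a (n%:R, 1).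

Variable RR : realType.

Definition is_character (phi : R * R -> RR) : Prop :=
  (forall a, ~ bd a -> phi a = 0) /\
  (forall a b, bd a -> bd b -> frac_eq a b -> phi a = phi b) /\
  (forall a b, bd a -> bd b -> phi (frac_add a b) = phi a + phi b) /\
  (forall a b, bd a -> bd b -> phi (frac_mul a b) = phi a * phi b) /\
  phi (1, 1) = 1 /\
  (forall a, bd a -> frac_le (0, 1) a -> 0 <= phi a).

Definition Kset : set {ptws (R * R) -> RR} := [set phi | is_character phi].

Definition Oinf (s : R) : set (set_type Kset) := [set phi | 0 < set_val phi (1, s)].
Definition gel (r s : R) : set_type Kset -> RR :=
  fun phi => (set_val phi (1, s))^-1 * set_val phi (r, s).
End PO.

Section Cae.
Variables (X : topologicalType) (RR : realType).
Definition cae_elem (D : set X) (f : X -> RR) : Prop :=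
  [/\ open D, dense D & {within D, continuous f}].
Definition cae_eq (D : set X) (f : X -> RR) (E : set X) (g : X -> RR) : Prop :=
  exists U : set X, [/\ open U, dense U, U `<=` D `&` E & forall x, U x -> f x = g x].
Definition cae_le (D : set X) (f : X -> RR) (E : set X) (g : X -> RR) : Prop :=
  exists U : set X, [/\ open U, dense U, U `<=` D `&` E & forall x, U x -> f x <= g x].
End Cae.

Arguments Kset [R] le RR.
Arguments Oinf [R] le RR s _.
Arguments gel [R] le RR r s _.

(* Main.v *)
Require Import Defs.
From HB Require Import structures.
From mathcomp Require Import all_boot all_order all_algebra.
From mathcomp Require Import all_classical all_reals all_analysis.
From mathcomp Require Import ring lra.
Import Order.TTheory GRing.Theory Num.Theory numFieldNormedType.Exports.
Local Open Scope classical_set_scope.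
Local Open Scope ring_scope.
Set Implicit Arguments. Unset Strict Implicit.

Section Top.
Variables (F : comPzRingType) (le : F -> F -> Prop) (RR : realType).
Local Notation X := (set_type (Kset le RR)).
Lemma sv_cont : continuous (set_val : X -> {ptws F * F -> RR}).
Proof. exact: initial_continuous. Qed.
Lemma ev_cont (p : F * F) : continuous (fun c : X => set_val c p).
Proof.
move=> c; apply: (@continuous_comp _ _ _ set_val (fun f : {ptws F * F -> RR} => f p)).
  exact: sv_cont.
exact: (@proj_continuous _ (fun _ : F * F => RR) p).
Qed.

Lemma sv_cvg (G : set_system X) (c0 : X) : Filter G ->
  (forall p, (fun c : X => set_val c p) @ G --> set_val c0 p) ->
  (set_val @ G) --> (set_val c0 : {ptws F * F -> RR}).
Proof.
move=> FG h.
apply/cvg_sup => i C.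
rewrite nbhsE => -[D [oD Dc DC]].
have [D' oD' eD] := oD.
have : ((fun c : X => set_val c i) @ G) D'.
  apply: h; apply: open_nbhs_nbhs; split => //.
  by move: Dc; rewrite -eD.
move=> hG; rewrite nbhs_filterE; apply: (@filterS _ G _ _ _ _ hG) => c hc /=; apply: DC; rewrite -eD; exact: hc.
Qed.

Lemma cvgX (G : set_system X) (c0 : X) : Filter G ->
  (forall p, (fun c : X => set_val c p) @ G --> set_val c0 p) -> G --> c0.
Proof.
move=> FG h A.
rewrite nbhsE => -[B [oB Bc0 BA]].
have [B' oB' eB] := oB.
have : (set_val @ G) B'.
  apply: (sv_cvg FG h); apply: open_nbhs_nbhs; split => //.
  by move: Bc0; rewrite -eB.
move=> hG; rewrite nbhs_filterE; apply: (@filterS _ G _ _ _ _ hG) => c hc /=; apply: BA; rewrite -eB; exact: hc.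
Qed.
End Top.

Section Alg.
Variables (F : comPzRingType) (le : F -> F -> Prop).
Hypothesis Hpo : po_field le.

Definition pos (x : F) := le 0 x.

Lemma le_refl' (x : F) : le x x. Proof. by case: Hpo => [[h _] _]. Qed.
Lemma le_anti' (x y : F) : le x y -> le y x -> x = y. Proof. by case: Hpo => [[_ [h _]] _]; apply: h. Qed.
Lemma le_trans' (x y z : F) : le x y -> le y z -> le x z. Proof. by case: Hpo => [[_ [_ [h _]]] _]; apply: h. Qed.
Lemma le_add' (x y t : F) : le x y -> le (x + t) (y + t). Proof. by case: Hpo => [[_ [_ [_ [h _]]]] _]; apply: h. Qed.
Lemma posM (x y : F) : pos x -> pos y -> pos (x * y). Proof. by case: Hpo => [[_ [_ [_ [_ [h _]]]]] _]; apply: h. Qed.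
Lemma posX (x : F) : pos (x * x). Proof. by case: Hpo => [[_ [_ [_ [_ [_ h]]]]] _]; apply: h. Qed.
Lemma field_inv (x : F) : x != 0 -> exists u, x * u = 1. Proof. by case: Hpo => _; apply. Qed.

Lemma leE x y : le x y <-> pos (y - x).
Proof.
split=> h.
  by have := le_add' (- x) h; rewrite subrr.
by have := le_add' x h; rewrite add0r subrK.
Qed.

Lemma posD x y : pos x -> pos y -> pos (x + y).
Proof.
move=> hx hy; apply: le_trans' hy _.
by have := le_add' y hx; rewrite add0r addrC.
Qed.

Lemma pos0 : pos 0. Proof. exact: le_refl'. Qed.
Lemma pos1 : pos 1. Proof. by have := posX 1; rewrite mulr1. Qed.
Lemma posn (n : nat) : pos n%:R.
Proof. elim: n => [|n ih]; first exact: pos0. by rewrite -addn1 natrD; apply: posD ih pos1. Qed.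

Lemma pos_anti x : pos x -> pos (- x) -> x = 0.
Proof. move=> h1 h2; apply: le_anti' _ h1; apply/leE; by rewrite sub0r. Qed.

Lemma triv_of_m1 : pos (-1) -> forall x : F, x = 0.
Proof. move=> h x; have e := pos_anti pos1 h. by rewrite -[x]mulr1 e mulr0. Qed.

Lemma pos_inv x u : pos x -> x * u = 1 -> pos u.
Proof. move=> hx e; have -> : u = x * (u * u) by rewrite mulrA e mul1r. exact: posM hx (posX u). Qed.

Lemma pos_half x : pos (x + x) -> pos x.
Proof.
move=> h; have [e2|n2] := eqVneq (2%:R : F) 0.
  have h1 : pos (-1).
    have -> : (-1 : F) = 1 - 2%:R by rewrite (natrD _ 1 1) opprD addrA subrr sub0r.
    by rewrite e2 subr0; exact: pos1.
  by rewrite (triv_of_m1 h1 x); exact: pos0.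
have [u hu] := field_inv n2.
have pu : pos u by apply: pos_inv hu; exact: posn.
have -> : x = (x + x) * u by rewrite -mulr2n -mulr_natr -mulrA hu mulr1.
exact: posM.
Qed.


Definition finv (x : F) := xget 0 [set u | x * u = 1].

Lemma finv_uniq (x u v : F) : x * u = 1 -> x * v = 1 -> u = v.
Proof. move=> hu hv; by rewrite -[u]mulr1 -hv mulrA (mulrC u) hu mul1r. Qed.

Lemma pos_loc s : pos (s - 1) -> pos s.
Proof. by move=> h; rewrite -(subrK 1 s); apply: posD h pos1. Qed.

Lemma loc_inv s : pos (s - 1) -> s * finv s = 1.
Proof.
move=> h; have [s0|s0] := eqVneq s 0.
  have h1 : pos (-1) by move: h; rewrite s0 sub0r.
  by rewrite (triv_of_m1 h1 (s * _)) (triv_of_m1 h1 1).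
have [u hu] := field_inv s0.
by have := @xgetPex _ 0 [set u | s * u = 1] (ex_intro _ u hu).
Qed.

Lemma pos_finv s : pos (s - 1) -> pos (finv s).
Proof. move=> h; exact: pos_inv (pos_loc h) (loc_inv h). Qed.

Lemma LocE s : Loc le s <-> pos (s - 1).
Proof.
split; first by case.
move=> h; split=> // r hr.
have -> : r = (r * s) * finv s by rewrite -mulrA loc_inv // mulr1.
exact: posM hr (pos_finv h).
Qed.

Lemma locM a b : pos (a - 1) -> pos (b - 1) -> pos (a * b - 1).
Proof.
move=> ha hb; have -> : a * b - 1 = (a - 1) * (b - 1) + ((a - 1) + (b - 1)) by ring.
by apply: posD; [apply: posM|apply: posD].
Qed.

Lemma finvM a b : pos (a - 1) -> pos (b - 1) -> finv (a * b) = finv a * finv b.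
Proof.
move=> ha hb; apply: (finv_uniq (x := a * b)); first exact: loc_inv (locM ha hb).
have -> : a * b * (finv a * finv b) = (a * finv a) * (b * finv b) by ring.
by rewrite !loc_inv // mulr1.
Qed.

Lemma loc1 : pos (1 - 1). Proof. rewrite subrr; exact: pos0. Qed.

Lemma finv1 : finv 1 = 1.
Proof. by have := loc_inv loc1; rewrite mul1r. Qed.

Definition A (x : F) := exists n : nat, pos (n%:R - x) /\ pos (x + n%:R).

Lemma A_nat (n : nat) : A n%:R.
Proof. exists n; rewrite subrr -natrD; split; [exact: pos0|exact: posn]. Qed.

Lemma A0 : A 0. Proof. by have := A_nat 0. Qed.
Lemma A1 : A 1. Proof. by have := A_nat 1. Qed.

Lemma AD x y : A x -> A y -> A (x + y).
Proof.
move=> [n [h1 h2]] [m [h3 h4]]; exists (n + m)%N; rewrite natrD; split.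
  have -> : n%:R + m%:R - (x + y) = (n%:R - x) + (m%:R - y) by ring.
  by apply: posD.
have -> : x + y + (n%:R + m%:R) = (x + n%:R) + (y + m%:R) by ring.
by apply: posD.
Qed.

Lemma AN x : A x -> A (- x).
Proof.
move=> [n [h1 h2]]; exists n; split.
  by rewrite opprK addrC.
by rewrite addrC.
Qed.

Lemma AM x y : A x -> A y -> A (x * y).
Proof.
move=> [n [h1 h2]] [m [h3 h4]]; exists (n * m)%N; rewrite natrM; split; apply: pos_half.
  have -> : n%:R * m%:R - x * y + (n%:R * m%:R - x * y) =
    (n%:R - x) * (y + m%:R) + (x + n%:R) * (m%:R - y) by ring.
  by apply: posD; apply: posM.
have -> : x * y + n%:R * m%:R + (x * y + n%:R * m%:R) =
  (n%:R - x) * (m%:R - y) + (x + n%:R) * (y + m%:R) by ring.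
by apply: posD; apply: posM.
Qed.

Lemma AB x y : A x -> A y -> A (x - y).
Proof. by move=> hx hy; apply: AD hx (AN hy). Qed.

Lemma A_int (z : int) : A z%:~R.
Proof.
case: z => n; first by rewrite -pmulrn; exact: A_nat.
by rewrite NegzE mulrNz -pmulrn; apply: AN; apply: A_nat.
Qed.

Lemma bdE (a : F * F) : bd le a <-> pos (a.2 - 1) /\ A (a.1 * finv a.2).
Proof.
case: a => r s /=; rewrite /bd /frac_le /=.
split.
  move=> [/LocE hl [n [/leE h1 /leE h2]]]; split=> //; exists n.
  have e := loc_inv hl; have pf := pos_finv hl; split.
    have -> : n%:R - r * finv s = (n%:R * s - r * 1) * finv s.
      by transitivity (n%:R * (s * finv s) - r * finv s); [rewrite e mulr1|ring].
    exact: posM h2 pf.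
  have -> : r * finv s + n%:R = (r * 1 - - n%:R * s) * finv s.
    by transitivity (r * finv s + n%:R * (s * finv s)); [rewrite e mulr1|ring].
  exact: posM h1 pf.
move=> [hl [n [h1 h2]]]; split; first exact/LocE.
have e := loc_inv hl; have ps := pos_loc hl.
exists n; split; apply/leE.
  have -> : r * 1 - - n%:R * s = (r * finv s + n%:R) * s.
    by transitivity (r * (s * finv s) + n%:R * s); [rewrite e !mulr1 mulNr opprK|ring].
  exact: posM h2 ps.
have -> : n%:R * s - r * 1 = (n%:R - r * finv s) * s.
  by transitivity (n%:R * s - r * (s * finv s)); [rewrite e !mulr1|ring].
exact: posM h1 ps.
Qed.


Lemma bd_A x : A x -> bd le (x, 1).
Proof. by move=> h; apply/bdE => /=; rewrite finv1 mulr1; split=> //; exact: loc1. Qed.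

Lemma bd_frac_add (a b : F * F) : bd le a -> bd le b ->
  bd le (frac_add a b) /\ (frac_add a b).1 * finv (frac_add a b).2 = a.1 * finv a.2 + b.1 * finv b.2.
Proof.
case: a b => [a1 a2] [b1 b2] /bdE [ha Ha] /bdE [hb Hb] /=.
have ea := loc_inv ha; have eb := loc_inv hb.
have E : (a1 * b2 + b1 * a2) * finv (a2 * b2) = a1 * finv a2 + b1 * finv b2.
  rewrite finvM //.
  transitivity (a1 * finv a2 * (b2 * finv b2) + b1 * finv b2 * (a2 * finv a2)); first by ring.
  by rewrite ea eb !mulr1.
split=> //; apply/bdE => /=; split; first exact: locM.
by rewrite E; apply: AD.
Qed.

Lemma bd_frac_mul (a b : F * F) : bd le a -> bd le b ->
  bd le (frac_mul a b) /\ (frac_mul a b).1 * finv (frac_mul a b).2 = (a.1 * finv a.2) * (b.1 * finv b.2).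
Proof.
case: a b => [a1 a2] [b1 b2] /bdE [ha Ha] /bdE [hb Hb] /=.
have E : (a1 * b1) * finv (a2 * b2) = (a1 * finv a2) * (b1 * finv b2).
  by rewrite finvM //; ring.
split=> //; apply/bdE => /=; split; first exact: locM.
by rewrite E; apply: AM.
Qed.

Lemma frac_eq_val (a b : F * F) : bd le a -> bd le b -> frac_eq a b ->
  a.1 * finv a.2 = b.1 * finv b.2.
Proof.
case: a b => [a1 a2] [b1 b2] /bdE [ha Ha] /bdE [hb Hb]; rewrite /frac_eq /= => e.
have ea := loc_inv ha; have eb := loc_inv hb.
transitivity ((a1 * b2) * finv a2 * finv b2); first by rewrite -mulrA (mulrC _ (finv b2)) mulrA -(mulrA a1) eb mulr1.
rewrite e; transitivity (b1 * finv b2 * (a2 * finv a2)); first by ring.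
by rewrite ea mulr1.
Qed.

Definition cone (Q : set F) :=
  [/\ (forall x y, Q x -> Q y -> Q (x + y)), (forall x y, Q x -> Q y -> Q (x * y)),
      (forall x, Q (x * x)) & ~ Q (-1)].

Definition ext (Q : set F) (a : F) : set F :=
  [set z | exists p q, [/\ Q p, Q q & z = p - a * q]].

Lemma cone0 Q : cone Q -> Q 0. Proof. by case=> _ _ h _; have := h 0; rewrite mulr0. Qed.
Lemma cone1 Q : cone Q -> Q 1. Proof. by case=> _ _ h _; have := h 1; rewrite mulr1. Qed.

Lemma ext_sub Q a : cone Q -> Q `<=` ext Q a.
Proof. by move=> hQ z hz; exists z, 0; split => //; [exact: cone0|rewrite mulr0 subr0]. Qed.

Lemma ext_neg Q a : cone Q -> ext Q a (- a).
Proof. by move=> hQ; exists 0, 1; split; [exact: cone0|exact: cone1|rewrite mulr1 sub0r]. Qed.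

Lemma ext_cone Q a : cone Q -> ~ Q a -> cone (ext Q a).
Proof.
move=> hQ hna; have [hD hM hX hm1] := hQ; split.
- move=> _ _ [p [q [hp hq ->]]] [p' [q' [hp' hq' ->]]].
  by exists (p + p'), (q + q'); split; [exact: hD|exact: hD|ring].
- move=> _ _ [p [q [hp hq ->]]] [p' [q' [hp' hq' ->]]].
  exists (p * p' + (a * a) * (q * q')), (p * q' + q * p'); split; last by ring.
    by apply: (hD); [exact: hM|apply: (hM) => //; exact: hM].
  by apply: (hD); exact: hM.
- by move=> x; apply: ext_sub.
- move=> [p [q [hp hq e]]].
  have [q0|nq0] := eqVneq q 0.
    by apply: hm1; move: e; rewrite q0 mulr0 subr0 => ->.
  have [u hu] := field_inv nq0.
  apply: hna.
  have eaq : a * q = p + 1 by apply/eqP; rewrite -subr_eq0; apply/eqP; transitivity (- (p - a * q) - 1); [ring|rewrite -e; ring].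
  have -> : a = (p + 1) * (q * (u * u)).
    by rewrite -eaq; transitivity (a * (q * u) * (q * u)); [rewrite hu !mulr1|ring].
  apply: (hM); first by apply: (hD) => //; exact: cone1.
  by apply: (hM) => //; exact: hX.
Qed.

Lemma exists_total c : ~ pos c ->
  exists M : set F, [/\ cone M, pos `<=` M, M (- c) & forall a, M a \/ M (- a)].
Proof.
move=> hc.
have cpos : cone pos.
  split; [exact: posD|exact: posM|exact: posX|].
  by move=> h; apply: hc; rewrite (triv_of_m1 h c); exact: pos0.
set C0 := ext pos c.
have cC0 : cone C0 by exact: ext_cone.
pose P := fun X : set F => cone (X `|` C0).
have [A0 [PA0 maxA0]] : exists A, P A /\ forall B, A `<` B -> ~ P B.
  apply: Zorn_bigcup => Fm FP tot.
  set U := \bigcup_(X in Fm) X `|` C0.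
  have key : forall x y, U x -> U y -> exists Z, [/\ cone Z, Z `<=` U, Z x & Z y].
    have sub : forall X, Fm X -> X `|` C0 `<=` U.
      by move=> X hX z [zX|zC]; [left; exists X|right].
    move=> x y [[X hX xX]|xC] [[Y hY yY]|yC].
    - have [XY|YX] := tot X Y hX hY.
        by exists (Y `|` C0); split; [exact: FP|exact: sub|left; exact: XY|left].
      by exists (X `|` C0); split; [exact: FP|exact: sub|left|left; exact: YX].
    - by exists (X `|` C0); split; [exact: FP|exact: sub|left|right].
    - by exists (Y `|` C0); split; [exact: FP|exact: sub|right|left].
    - by exists C0; split => //; move=> z hz; right.
  split.
  - move=> x y hx hy; have [Z [[hD _ _ _] ZU hx' hy']] := key x y hx hy.
    by apply: ZU; apply: hD.
  - move=> x y hx hy; have [Z [[_ hM _ _] ZU hx' hy']] := key x y hx hy.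
    by apply: ZU; apply: hM.
  - by move=> x; right; case: cC0 => _ _ h _; apply: h.
  - move=> [[X hX hm]|hm].
      by have [_ _ _ h] := FP X hX; apply: h; left.
    by case: cC0.
set M := A0 `|` C0.
have cM : cone M by [].
have C0M : C0 `<=` M by move=> z hz; right.
exists M; split => //.
- by move=> z hz; apply: C0M; apply: ext_sub.
- by apply: C0M; apply: ext_neg.
move=> a; have [|hna] := pselect (M a); first by left.
right.
set B := ext M a.
have cB : cone B by exact: ext_cone.
have MB : M `<=` B by exact: ext_sub.
have PB : P B.
  rewrite /P (_ : B `|` C0 = B) //; apply/setUidPl.
  by move=> z hz; apply: MB; apply: C0M.
have A0B : A0 `<=` B by move=> z hz; apply: MB; left.
have BA0 : B `<=` A0.
  apply: contrapT => nBA; exact: (maxA0 B (conj A0B nBA) PB).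
by left; apply: BA0; apply: ext_neg.
Qed.

Variable RR : realType.

Definition rhomA (f : F -> RR) :=
  [/\ (forall x y, A x -> A y -> f (x + y) = f x + f y),
      (forall x y, A x -> A y -> f (x * y) = f x * f y),
      f 1 = 1 & (forall x, A x -> pos x -> 0 <= f x)].

Section RhomA.
Variable f : F -> RR.
Hypothesis hf : rhomA f.

Lemma rhD x y : A x -> A y -> f (x + y) = f x + f y. Proof. by case: hf => h _ _ _; apply: h. Qed.
Lemma rhM x y : A x -> A y -> f (x * y) = f x * f y. Proof. by case: hf => _ h _ _; apply: h. Qed.
Lemma rh1 : f 1 = 1. Proof. by case: hf. Qed.
Lemma rhpos x : A x -> pos x -> 0 <= f x. Proof. by case: hf => _ _ _ h; apply: h. Qed.
Lemma rh0 : f 0 = 0.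
Proof. by have := rhD A0 A0; rewrite addr0 => h; lra. Qed.
Lemma rhN x : A x -> f (- x) = - f x.
Proof.
move=> h; have := rhD h (AN h); rewrite subrr rh0 => e; lra.
Qed.
Lemma rhB x y : A x -> A y -> f (x - y) = f x - f y.
Proof. by move=> hx hy; rewrite rhD ?rhN //; exact: AN. Qed.
Lemma rh_nat (n : nat) : f n%:R = n%:R.
Proof.
elim: n => [|n ih]; first exact: rh0.
by rewrite -addn1 !natrD rhD ?ih ?rh1 //; [exact: A_nat|exact: A1].
Qed.
Lemma rh_int (z : int) : f z%:~R = z%:~R.
Proof.
case: z => n; first by rewrite -!pmulrn rh_nat.
by rewrite NegzE !mulrNz -!pmulrn rhN ?rh_nat //; exact: A_nat.
Qed.
Lemma rh_le x y : A x -> A y -> pos (y - x) -> f x <= f y.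
Proof. move=> hx hy h; rewrite -subr_ge0 -rhB //; apply: rhpos h; exact: AB. Qed.
End RhomA.

Definition phiOf (f : F -> RR) (a : F * F) : RR :=
  if `[< bd le a >] then f (a.1 * finv a.2) else 0.

Lemma phiOfE f a : bd le a -> phiOf f a = f (a.1 * finv a.2).
Proof. by move=> h; rewrite /phiOf asboolT. Qed.

Lemma phiOf_char f : rhomA f -> is_character le (phiOf f).
Proof.
move=> hf; split.
  by move=> a h; rewrite /phiOf asboolF.
split.
  by move=> a b ha hb e; rewrite !phiOfE // (frac_eq_val ha hb e).
split.
  move=> a b ha hb; have [h1 h2] := bd_frac_add ha hb.
  rewrite !phiOfE // h2 rhD //; [by case/bdE: ha|by case/bdE: hb].
split.
  move=> a b ha hb; have [h1 h2] := bd_frac_mul ha hb.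
  rewrite !phiOfE // h2 rhM //; [by case/bdE: ha|by case/bdE: hb].
split.
  by rewrite phiOfE /= ?finv1 ?mulr1 ?(rh1 hf) //; exact: bd_A A1.
move=> a ha; rewrite /frac_le /= mul0r mulr1 => h.
rewrite phiOfE //; apply: (rhpos hf); first by case/bdE: ha.
by apply: posM h _; apply: pos_finv; case/bdE: ha.
Qed.

Lemma phiOf_psi f x : A x -> phiOf f (x, 1) = f x.
Proof. by move=> h; rewrite phiOfE /= ?finv1 ?mulr1 //; exact: bd_A. Qed.

Section Char.
Variable phi : F * F -> RR.
Hypothesis hphi : is_character le phi.

Lemma char_eval a : bd le a -> phi a = phi (a.1 * finv a.2, 1).
Proof.
move=> h; case: hphi => _ [he _]; apply: he => //.
  by apply: bd_A; case/bdE: h.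
by case: a h => r s h; rewrite /frac_eq /= mulr1 -mulrA (mulrC _ s) loc_inv ?mulr1 //; case/bdE: h.
Qed.

Lemma char_rhom : rhomA (fun x => phi (x, 1)).
Proof.
case: hphi => _ [_ [hadd [hmul [h1 hpos]]]]; split => //.
- move=> x y hx hy; rewrite -hadd; try exact: bd_A.
  rewrite (char_eval (proj1 (bd_frac_add (bd_A hx) (bd_A hy)))).
  by rewrite (proj2 (bd_frac_add (bd_A hx) (bd_A hy))) /= finv1 !mulr1.
- move=> x y hx hy; rewrite -hmul; try exact: bd_A.
  rewrite (char_eval (proj1 (bd_frac_mul (bd_A hx) (bd_A hy)))).
  by rewrite (proj2 (bd_frac_mul (bd_A hx) (bd_A hy))) /= finv1 !mulr1.
- move=> x hx px; apply: hpos; first exact: bd_A.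
  by rewrite /frac_le /= mul0r mulr1.
Qed.
End Char.

Lemma zero_of_bound (d C : RR) : (forall N : nat, N.+1%:R * `|d| <= C) -> d = 0.
Proof.
move=> h; apply/eqP; apply: contraT => nd.
have pd : 0 < `|d| by rewrite normr_gt0.
have hC := h 0%N; have C0 : 0 <= C by apply: le_trans hC; rewrite mul1r.
have := h (Num.trunc (C / `|d|)).
have := truncnS_gt (C / `|d|); rewrite ltr_pdivrMr // => h1 h2.
by have := lt_le_trans h1 h2; rewrite ltxx.
Qed.

Lemma nat_search (Q : nat -> Prop) K : Q 0%N -> ~ Q K -> exists k, Q k /\ ~ Q k.+1.
Proof.
move=> h0; elim: K => [//|K ih] hK.
have [hQ|hQ] := pselect (Q K); first by exists K.
exact: ih.
Qed.

Ltac solveA := repeat first [assumption|exact: A_int|exact: A_nat|exact: A1|exact: A0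
  |apply: AN|apply: AM|apply: AD].

Section Std.
Variable M : set F.
Hypotheses (cM : cone M) (posMs : pos `<=` M) (totM : forall a, M a \/ M (- a)).

Let MD x y : M x -> M y -> M (x + y). Proof. by case: cM => h _ _ _; apply: h. Qed.
Let MM x y : M x -> M y -> M (x * y). Proof. by case: cM => _ h _ _; apply: h. Qed.
Let Mm1 : ~ M (-1). Proof. by case: cM. Qed.
Let Mnat (n : nat) : M n%:R. Proof. apply: posMs; exact: posn. Qed.

Lemma M_int_ge0 (z : int) : M z%:~R -> 0 <= z.
Proof.
case: z => // n; rewrite NegzE mulrNz -pmulrn => h; exfalso; apply: Mm1.
have -> : (-1 : F) = - (n.+1%:R) + n%:R by rewrite -addn1 natrD; ring.
exact: MD.
Qed.

Lemma Mcmp (x : F) (n k : int) (m N : nat) :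
  M (m.+1%:R * x - n%:~R) -> M (k%:~R - N.+1%:R * x) ->
  n%:~R / m.+1%:R <= k%:~R / N.+1%:R :> RR.
Proof.
move=> h1 h2.
have h : M ((m.+1%:Z * k - N.+1%:Z * n)%:~R).
  rewrite intrB !intrM -!pmulrn.
  have -> : m.+1%:R * k%:~R - N.+1%:R * n%:~R =
    N.+1%:R * (m.+1%:R * x - n%:~R) + m.+1%:R * (k%:~R - N.+1%:R * x) :> F by ring.
  by apply: MD; apply: MM.
have := M_int_ge0 h; rewrite subr_ge0 => hle.
have hle' : (N.+1%:Z * n)%:~R <= (m.+1%:Z * k)%:~R :> RR by rewrite ler_int.
move: hle'; rewrite !intrM -!pmulrn => hle'.
rewrite ler_pdivrMr // mulrAC ler_pdivlMr //.
by rewrite mulrC [X in _ <= X]mulrC.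
Qed.

Definition Lset (x : F) : set RR :=
  [set t | exists (n : int) (m : nat), t = n%:~R / m.+1%:R /\ M (m.+1%:R * x - n%:~R)].

Definition st (x : F) : RR := sup (Lset x).

Lemma M_bound x : A x -> exists n0 : nat, M ((n0%:Z)%:~R - 0%N.+1%:R * x) /\ M (0%N.+1%:R * x - (- n0%:Z)%:~R).
Proof.
move=> [n [h1 h2]]; exists n; split; apply: posMs.
  by rewrite -pmulrn mulr1n mul1r.
by rewrite mulr1n mul1r intrN -pmulrn opprK.
Qed.

Lemma Lset_ne x : A x -> Lset x !=set0.
Proof. move=> /M_bound [n0 [_ h]]; by exists ((- n0%:Z)%:~R / 0%N.+1%:R), (- n0%:Z), 0%N. Qed.

Lemma Lset_ub x : A x -> has_ubound (Lset x).
Proof.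
move=> /M_bound [n0 [h _]]; exists ((n0%:Z)%:~R / 0%N.+1%:R).
by move=> _ [n [m [-> hm]]]; apply: Mcmp hm h.
Qed.

Lemma st_lower x (n : int) (m : nat) : A x -> M (m.+1%:R * x - n%:~R) -> n%:~R / m.+1%:R <= st x.
Proof. move=> hA h; apply: (ub_le_sup (Lset_ub hA)); by exists n, m. Qed.

Lemma st_upper x (k : int) (N : nat) : A x -> M (k%:~R - N.+1%:R * x) -> st x <= k%:~R / N.+1%:R.
Proof.
move=> hA h; apply: ge_sup; first exact: Lset_ne.
by move=> _ [n [m [-> hm]]]; apply: Mcmp hm h.
Qed.

Lemma st_approx x (N : nat) : A x ->
  exists a : int, M (N.+1%:R * x - a%:~R) /\ M ((a + 1)%:~R - N.+1%:R * x).
Proof.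
move=> hA; have hy : A (N.+1%:R * x) by apply: AM => //; exact: A_nat.
have [n0 [h1 h2]] := hy.
pose Q := fun k : nat => M (N.+1%:R * x + n0%:R - k%:R).
have Q0 : Q 0%N by rewrite /Q subr0; exact: posMs.
have QK : ~ Q (n0 + n0).+1%N.
  move=> hq; apply: Mm1.
  have -> : (-1 : F) = (N.+1%:R * x + n0%:R - (n0 + n0).+1%:R) + (n0%:R - N.+1%:R * x).
    by rewrite -addn1 !natrD; ring.
  by apply: MD => //; exact: posMs.
have [k [hk hk1]] := nat_search Q0 QK.
exists (k%:Z - n0%:Z); split.
  by move: hk; rewrite /Q intrB -!pmulrn; congr M; ring.
have [h|h] := totM (N.+1%:R * x + n0%:R - k.+1%:R); first by [].
move: h; rewrite intrD intrB -!pmulrn -addn1 natrD; congr M; ring.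
Qed.

Lemma st_bounds x (N : nat) : A x ->
  exists a : int, [/\ M (N.+1%:R * x - a%:~R), M ((a + 1)%:~R - N.+1%:R * x),
     a%:~R / N.+1%:R <= st x & st x <= (a + 1)%:~R / N.+1%:R].
Proof.
move=> hA; have [a [h1 h2]] := st_approx N hA.
by exists a; split => //; [apply: st_lower|apply: st_upper].
Qed.

Lemma intr1E : (1 : int)%:~R = 1 :> RR. Proof. by []. Qed.

Lemma fin_bound (d c : RR) (N : nat) : `|d| <= c * N.+1%:R^-1 -> N.+1%:R * `|d| <= c.
Proof.
move=> h; rewrite mulrC -ler_pdivlMr //; exact: h.
Qed.

Lemma st_add x y : A x -> A y -> st (x + y) = st x + st y.
Proof.
move=> hx hy; apply: subr0_eq; apply: (@zero_of_bound _ 2) => N.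
have [a [ha1 ha2 ha3 ha4]] := st_bounds N hx.
have [b [hb1 hb2 hb3 hb4]] := st_bounds N hy.
have hxy := AD hx hy.
have l : (a + b)%:~R / N.+1%:R <= st (x + y).
  apply: st_lower => //; rewrite intrD; have := MD ha1 hb1; congr M; ring.
have u : st (x + y) <= ((a + 1) + (b + 1))%:~R / N.+1%:R.
  apply: st_upper => //; rewrite intrD; have := MD ha2 hb2; congr M; ring.
apply: fin_bound; set w := N.+1%:R^-1 in l u ha3 ha4 hb3 hb4 *.
rewrite !intrD in l u ha3 ha4 hb3 hb4.
rewrite !intr1E in l u ha3 ha4 hb3 hb4.
rewrite ler_norml; apply/andP; split; lra.
Qed.

Lemma st0 : st 0 = 0.
Proof. by have := st_add A0 A0; rewrite addr0 => h; lra. Qed.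

Lemma st_N x : A x -> st (- x) = - st x.
Proof. move=> h; have := st_add h (AN h); rewrite subrr st0 => e; lra. Qed.

Lemma st_natM (n : nat) t : A t -> st (n%:R * t) = n%:R * st t.
Proof.
move=> ht; elim: n => [|n ih]; first by rewrite !mul0r st0.
rewrite -addn1 !natrD !mulrDl !mul1r st_add ?ih //.
by apply: AM => //; exact: A_nat.
Qed.

Lemma st_intM (k : int) t : A t -> st (k%:~R * t) = k%:~R * st t.
Proof.
move=> ht; case: k => n; first by rewrite -!pmulrn st_natM.
rewrite NegzE !mulrNz -!pmulrn !mulNr st_N ?st_natM //.
by apply: AM => //; exact: A_nat.
Qed.

Lemma st1 : st 1 = 1.
Proof.
apply/eqP; rewrite eq_le; apply/andP; split.
  have := @st_upper 1 1 0 A1; rewrite mulr1n mulr1 subrr divr1; apply; exact: Mnat 0.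
have := @st_lower 1 1 0 A1; rewrite mulr1n mulr1 subrr divr1; apply; exact: Mnat 0.
Qed.

Lemma st_int (k : int) : st k%:~R = k%:~R.
Proof. by have := st_intM k A1; rewrite !mulr1 st1 mulr1. Qed.

Lemma st_ge0 x : A x -> M x -> 0 <= st x.
Proof.
move=> hA h; have := @st_lower x 0 0 hA; rewrite mul0r; apply.
by rewrite mulr1n mul1r subr0.
Qed.

Lemma st_le1 x : A x -> M (1 - x) -> st x <= 1.
Proof.
move=> hA h; have := @st_upper x 1 0 hA; rewrite mulr1n divr1; apply.
by rewrite mul1r.
Qed.

Lemma st_mul x y : A x -> A y -> st (x * y) = st x * st y.
Proof.
move=> hx hy; apply: subr0_eq; apply: (@zero_of_bound _ 1) => N.
have [a [ha1 ha2 _ _]] := st_bounds N hx.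
have [b [hb1 hb2 _ _]] := st_bounds N hy.
set z := N.+1%:R * x - a%:~R in ha1 ha2.
set w := N.+1%:R * y - b%:~R in hb1 hb2.
have Az : A z by apply: AB; [apply: AM => //; exact: A_nat|exact: A_int].
have Aw : A w by apply: AB; [apply: AM => //; exact: A_nat|exact: A_int].
have Mz1 : M (1 - z) by move: ha2; rewrite intrD; congr M; rewrite /z; ring.
have Mw1 : M (1 - w) by move: hb2; rewrite intrD; congr M; rewrite /w; ring.
have hZ : st z = N.+1%:R * st x - a%:~R.
  by rewrite /z st_add ?st_N ?st_natM ?st_int //; solveA.
have hW : st w = N.+1%:R * st y - b%:~R.
  by rewrite /w st_add ?st_N ?st_natM ?st_int //; solveA.
have E : (N.+1 * N.+1)%:R * (x * y) = a%:~R * b%:~R + a%:~R * w + b%:~R * z + z * w.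
  by rewrite /z /w natrM; ring.
have Axy := AM hx hy.
have hP : (N.+1 * N.+1)%:R * st (x * y) = a%:~R * b%:~R + a%:~R * st w + b%:~R * st z + st (z * w).
  clearbody z w.
  by rewrite -st_natM // E st_add ?st_add ?st_add ?st_intM ?st_int //; solveA.
have Q0 : 0 <= st (z * w) by apply: st_ge0; [exact: AM|exact: MM].
have Q1 : st (z * w) <= 1.
  apply: st_le1; first exact: AM.
  have -> : 1 - z * w = (1 - z) + z * (1 - w) by ring.
  by apply: MD => //; apply: MM.
have Z0 : 0 <= st z by apply: st_ge0.
have Z1 : st z <= 1 by apply: st_le1.
have W0 : 0 <= st w by apply: st_ge0.
have W1 : st w <= 1 by apply: st_le1.
set D := st (x * y) - st x * st y.
have ED : (N.+1 * N.+1)%:R * D = st (z * w) - st z * st w.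
  rewrite /D mulrBr hP hZ hW natrM; ring.
have hD : `|(N.+1 * N.+1)%:R * D| <= 1.
  rewrite ED ler_norml; apply/andP; split; nra.
move: hD; rewrite normrM normr_nat natrM -mulrA => hD.
apply: le_trans hD; by rewrite ler_peMl // ler1n.
Qed.

Lemma st_rhom : rhomA st.
Proof.
split; [exact: st_add|exact: st_mul|exact: st1|].
by move=> x hA hp; apply: st_ge0 => //; exact: posMs.
Qed.

End Std.

Hypothesis Harch : archimedean le.

Lemma key g : A g -> ~ pos (- g) -> exists phi : F * F -> RR, is_character le phi /\ 0 < phi (g, 1).
Proof.
move=> hg hng.
have [k hk] : exists k : nat, ~ pos (k.+1%:R * - g + 1).
  apply: contrapT => hall; apply: hng; apply: (Harch (h := 1)) => k.
  apply: contrapT => hk; apply: hall; by exists k.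
have [M [cM pM mc tM]] := exists_total hk.
have hr := st_rhom cM pM tM.
exists (phiOf (st M)); split; first exact: phiOf_char.
rewrite phiOf_psi //.
have Ac : A (k.+1%:R * - g + 1) by solveA.
have h0 := st_ge0 cM pM (AN Ac) mc.
rewrite (rhN hr Ac) (rhD hr) ?(rhM hr) ?(rh_nat hr) ?(rhN hr) ?(rh1 hr) in h0; try solveA.
have : 0 < k.+1%:R * st M g by lra.
by rewrite pmulr_rgt0.
Qed.

Local Notation X := (set_type (Kset le RR)).

Lemma charX (c : X) : is_character le (set_val c).
Proof. by have := set_valP c. Qed.

Definition psi (c : X) (x : F) : RR := set_val c (x, 1).

Lemma psi_rhom c : rhomA (psi c).
Proof. exact: (@char_rhom (set_val c) (charX c)). Qed.

Lemma ev_bd c a : bd le a -> set_val c a = psi c (a.1 * finv a.2).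
Proof. exact: (@char_eval (set_val c) (charX c)). Qed.

Definition mkX (phi : F * F -> RR) (h : is_character le phi) : X :=
  @exist _ _ phi (mem_set h).

Definition xv (p : F * F) : F := if `[< bd le p >] then p.1 * finv p.2 else 0.

Lemma A_xv p : A (xv p).
Proof.
rewrite /xv; case: ifPn => [/asboolP h|_]; last exact: A0.
by case/bdE: h.
Qed.

Lemma ev_xv c p : set_val c p = psi c (xv p).
Proof.
rewrite /xv; case: ifPn => [/asboolP h|/asboolP h]; first exact: ev_bd.
rewrite (rh0 (psi_rhom c)); case: (charX c) => h0 _; exact: h0.
Qed.

Lemma A_sum (g : F * F -> F) (l : seq (F * F)) :
  (forall p, A (g p)) -> A (\sum_(p <- l) g p).
Proof.
move=> hg; elim: l => [|p l ih]; first by rewrite big_nil; exact: A0.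
by rewrite big_cons; apply: AD.
Qed.

Lemma psi_sum c (g : F * F -> F) (l : seq (F * F)) :
  (forall p, A (g p)) -> psi c (\sum_(p <- l) g p) = \sum_(p <- l) psi c (g p).
Proof.
move=> hg; elim: l => [|p l ih]; first by rewrite !big_nil (rh0 (psi_rhom c)).
by rewrite !big_cons (rhD (psi_rhom c)) ?ih //; exact: A_sum.
Qed.

Lemma le_sum_mem (u : F * F -> RR) (l : seq (F * F)) p :
  (forall q, 0 <= u q) -> p \in l -> u p <= \sum_(q <- l) u q.
Proof.
move=> h0; elim: l => [//|q l ih]; rewrite in_cons big_cons => /orP[/eqP ->|hp].
  by rewrite lerDl sumr_ge0.
by apply: le_trans (ih hp) _; rewrite lerDr.
Qed.

Lemma sum_le_size (u : F * F -> RR) (l : seq (F * F)) :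
  (forall q, u q <= 1) -> \sum_(q <- l) u q <= (size l)%:R.
Proof.
move=> h1; elim: l => [|q l ih]; first by rewrite big_nil.
by rewrite big_cons /= -addn1 natrD addrC lerD.
Qed.

Lemma pos_v s : pos (s - 1) -> A (finv s) /\ pos (finv s).
Proof.
move=> hs; have pv := pos_finv hs; split => //.
exists 1%N; split; last by apply: posD => //; exact: (posn 1).
have -> : 1%:R - finv s = (s - 1) * finv s.
  by rewrite mulrBl (loc_inv hs) mul1r.
exact: (posM hs pv).
Qed.

Lemma bd_1s s : pos (s - 1) -> bd le (1, s).
Proof. move=> hs; apply/bdE => /=; rewrite mul1r; split => //; exact: (pos_v hs).1. Qed.

Lemma Oinf_psi c s : pos (s - 1) -> set_val c (1, s) = psi c (finv s).
Proof. by move=> hs; rewrite ev_bd ?mul1r //; exact: bd_1s. Qed.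

Lemma prod_pos (P Q : RR) : 0 < P * Q -> 0 <= Q -> 0 < Q /\ 0 < P.
Proof.
move=> h hQ; have Q0 : 0 < Q.
  rewrite lt_neqAle hQ andbT; apply/eqP => e; by move: h; rewrite -e mulr0 ltxx.
by split => //; move: h; rewrite pmulr_lgt0.
Qed.

Lemma exists_near s (c0 : X) (l : seq (F * F)) (e : RR) : pos (s - 1) -> 0 < e ->
  exists c : X, Oinf le RR s c /\ forall p, p \in l -> `|set_val c p - set_val c0 p| < e.
Proof.
move=> hs he.
have [Av pv] := pos_v hs.
set n := size l.
set N := Num.trunc ((n.+2)%:R / e).
have hN : (n.+2)%:R / e < N.+1%:R by exact: truncnS_gt.
pose a := fun p => Num.floor (N.+1%:R * set_val c0 p).
pose z := fun p => N.+1%:R * xv p - (a p)%:~R.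
have Az : forall p, A (z p).
  move=> p; apply: AD; first by apply: AM; [exact: (A_nat _)|exact: A_xv].
  by apply: AN; exact: (A_int _).
pose f := n.+1%:R - \sum_(p <- l) z p * z p.
have Azz : forall p, A (z p * z p) by move=> p; apply: AM.
have Af : A f by apply: AD; [exact: (A_nat _)|apply: AN; exact: A_sum].
have psi_z : forall c p, psi c (z p) = N.+1%:R * set_val c p - (a p)%:~R.
  move=> c p; rewrite (rhB (psi_rhom c)) ?(rhM (psi_rhom c)) ?(rh_nat (psi_rhom c)) ?(rh_int (psi_rhom c)) -?ev_xv //.
  - exact: (A_nat _).
  - exact: A_xv.
  - by apply: AM; [exact: (A_nat _)|exact: A_xv].
  - exact: (A_int _).
have psi_f : forall c, psi c f = n.+1%:R - \sum_(p <- l) (N.+1%:R * set_val c p - (a p)%:~R) ^+ 2.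
  move=> c; rewrite (rhB (psi_rhom c)) ?(rh_nat (psi_rhom c)) ?psi_sum //; last 2 first.
  - exact: (A_nat _).
  - exact: A_sum.
  by congr (_ - _); apply: eq_bigr => p _; rewrite (rhM (psi_rhom c)) // psi_z expr2.
have frac0 : forall p, 0 <= N.+1%:R * set_val c0 p - (a p)%:~R < 1.
  move=> p; have /andP[h1 h2] := mem_rg1_floor (N.+1%:R * set_val c0 p).
  by apply/andP; split; lra.
have f0 : 1 <= psi c0 f.
  rewrite psi_f.
  have : \sum_(p <- l) (N.+1%:R * set_val c0 p - (a p)%:~R) ^+ 2 <= n%:R.
    apply: sum_le_size => q; have /andP[h1 h2] := frac0 q.
    by rewrite expr_le1 // ltW.
  by rewrite -addn1 natrD; lra.
have npos : ~ pos (- (f * finv s)).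
  move=> hp; have : pos (- f).
    have -> : - f = - (f * finv s) * s by rewrite mulNr -mulrA (mulrC _ s) (loc_inv hs) mulr1.
    by apply: posM hp _; exact: (pos_loc hs).
  move=> /(rhpos (psi_rhom c0) (AN Af)); rewrite (rhN (psi_rhom c0)) //; lra.
have [phi [hphi hpos]] := key (AM Af Av) npos.
set c := mkX hphi.
have hpc : 0 < psi c f * psi c (finv s).
  by rewrite -(rhM (psi_rhom c)).
have [hv hf] := prod_pos hpc (rhpos (psi_rhom c) Av pv).
exists c; split; first by rewrite /Oinf /= (Oinf_psi c hs).
move=> p hp.
move: hf; rewrite psi_f => hf.
have hsq : (N.+1%:R * set_val c p - (a p)%:~R) ^+ 2 < n.+1%:R.
  have hle : (N.+1%:R * set_val c p - (a p)%:~R) ^+ 2 <=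
      \sum_(q <- l) (N.+1%:R * set_val c q - (a q)%:~R) ^+ 2.
    exact: (le_sum_mem (u := fun q => (N.+1%:R * set_val c q - (a q)%:~R) ^+ 2) (fun q => sqr_ge0 _) hp).
  lra.
have habs : `|N.+1%:R * set_val c p - (a p)%:~R| < n.+1%:R.
  rewrite ltNge; apply/negP => hge.
  have n1 : 1 <= (n.+1)%:R :> RR by rewrite ler1n.
  set u := N.+1%:R * set_val c p - (a p)%:~R in hsq hge.
  have eu : `|u| ^+ 2 = u ^+ 2 by rewrite real_normK // num_real.
  have u0 := normr_ge0 u.
  rewrite -eu in hsq; nra.
have [g1 g2] := andP (frac0 p).
have hdiff : N.+1%:R * `|set_val c p - set_val c0 p| < n.+2%:R.
  have -> : N.+1%:R * `|set_val c p - set_val c0 p| =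
      `|(N.+1%:R * set_val c p - (a p)%:~R) - (N.+1%:R * set_val c0 p - (a p)%:~R)|.
    by rewrite -[X in X * _]normr_nat -normrM; congr `|_|; ring.
  apply: le_lt_trans (ler_normB _ _) _.
  have e2 : n.+2%:R = n.+1%:R + 1 :> RR by rewrite -[n.+2]addn1 natrD.
  rewrite (ger0_norm g1); lra.
move: hN; rewrite ltr_pdivrMr // => hN.
have hN' : N.+1%:R * `|set_val c p - set_val c0 p| < N.+1%:R * e by lra.
by rewrite ltr_pM2l in hN'.
Qed.


Lemma dense_Oinf s : pos (s - 1) -> dense (Oinf le RR s).
Proof.
move=> hs O [c0 Oc0] oO.
pose I := [set ie : seq (F * F) * RR | 0 < ie.2].
pose B := fun ie : seq (F * F) * RR => [set c : X | Oinf le RR s c /\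
  forall p, p \in ie.1 -> `|set_val c p - set_val c0 p| < ie.2].
have FG : Filter (filter_from I B).
  apply: filter_from_filter; first by exists ([::], 1); rewrite /I /= ltr01.
  move=> [l1 e1] [l2 e2]; rewrite /I /= => h1 h2.
  exists (l1 ++ l2, Num.min e1 e2); first by rewrite /I /= lt_min h1 h2.
  move=> c [hc hp] /=; split; split => // p hpl.
    by have := hp p; rewrite mem_cat hpl /= lt_min => /(_ isT) /andP[].
  by have := hp p; rewrite mem_cat hpl orbT lt_min => /(_ isT) /andP[].
have PG : ProperFilter (filter_from I B).
  apply: filter_from_proper => -[l e]; rewrite /I /= => he.
  have [c [h1 h2]] := exists_near c0 l hs he.
  by exists c.
have cv : filter_from I B --> c0.
  apply: cvgX => p; apply/cvgrPdist_lt => e e0.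
  exists ([:: p], e) => //= c [_ hc]; rewrite distrC; apply: hc; by rewrite mem_seq1.
have GO : filter_from I B O by apply: cv; apply: open_nbhs_nbhs.
have GS : filter_from I B (Oinf le RR s) by exists ([::], 1); [rewrite /I /= ltr01|move=> c []].
have [c [h1 h2]] := filter_ex (filterI GO GS).
by exists c.
Qed.

Lemma open_Oinf s : open (Oinf le RR s).
Proof.
have -> : Oinf le RR s = (fun c : X => set_val c (1, s)) @^-1` [set x | 0 < x] by [].
by apply: open_comp; [move=> c _; exact: ev_cont|exact: open_gt].
Qed.

Lemma gel_cont r s : {within Oinf le RR s, continuous (gel le RR r s)}.
Proof.
apply: continuous_in_subspaceT => c /set_mem hc.
have Fc : Filter (nbhs c) := nbhs_filter c.
apply: (@cvgM _ _ (nbhs c) Fc (fun x : X => (set_val x (1, s))^-1) (fun x : X => set_val x (r, s))).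
  apply: (@cvgV _ _ (nbhs c) Fc (fun x : X => set_val x (1, s))); first by rewrite gt_eqF.
  exact: ev_cont.
exact: ev_cont.
Qed.

Lemma localizable_thm : localizable le.
Proof.
move=> r; exists (1 + r * r); split; first by apply/LocE; rewrite (_ : 1 + r * r - 1 = r * r); [exact: posX|ring].
split; apply/leE; apply: pos_half.
  have -> : r - - (1 + r * r) + (r - - (1 + r * r)) = (r + 1) * (r + 1) + (r * r + 1) by ring.
  by apply: posD; [exact: posX|apply: posD; [exact: posX|exact: pos1]].
have -> : 1 + r * r - r + (1 + r * r - r) = (r - 1) * (r - 1) + (r * r + 1) by ring.
by apply: posD; [exact: posX|apply: posD; [exact: posX|exact: pos1]].
Qed.

Lemma bd_parts r s : bd le (r, s) -> pos (s - 1) /\ A (r * finv s).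
Proof. by move/bdE. Qed.

Lemma gelE c r s : bd le (r, s) ->
  gel le RR r s c = (psi c (finv s))^-1 * psi c (r * finv s).
Proof.
move=> h; have [hs _] := bd_parts h.
by rewrite /gel (Oinf_psi c hs) ev_bd.
Qed.

Lemma Oinf_pos c s : pos (s - 1) -> Oinf le RR s c -> 0 < psi c (finv s).
Proof. by move=> hs; rewrite /Oinf /= (Oinf_psi c hs). Qed.

Lemma main_thm :
  localizable le /\
  (forall r s : F, bd le (r, s) ->
     cae_elem (Oinf le RR s) (gel le RR r s)) /\
  (forall r r' s s' t : F, bd le (r, s) -> bd le (r', s') -> bd le (r + r', t) ->
     cae_eq (Oinf le RR t) (gel le RR (r + r') t)
            (Oinf le RR s `&` Oinf le RR s') (gel le RR r s \+ gel le RR r' s')) /\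
  (forall r r' s s' t : F, bd le (r, s) -> bd le (r', s') -> bd le (r * r', t) ->
     cae_eq (Oinf le RR t) (gel le RR (r * r') t)
            (Oinf le RR s `&` Oinf le RR s') (gel le RR r s \* gel le RR r' s')) /\
  (forall t : F, bd le (1, t) ->
     cae_eq (Oinf le RR t) (gel le RR 1 t) setT (fun _ => 1)) /\
  (forall r s : F, bd le (r, s) -> le 0 r ->
     cae_le setT (fun _ => 0) (Oinf le RR s) (gel le RR r s)) /\
  (forall r s : F, bd le (r, s) ->
     cae_le setT (fun _ => 0) (Oinf le RR s) (gel le RR r s) -> le 0 r).
Proof.
split; first exact: localizable_thm.
split.
  move=> r s h; have [hs _] := bd_parts h.
  split; [exact: open_Oinf|exact: dense_Oinf|exact: gel_cont].
have dense3 : forall s s' t, pos (s - 1) -> pos (s' - 1) -> pos (t - 1) ->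
    dense (Oinf le RR t `&` (Oinf le RR s `&` Oinf le RR s')).
  move=> s s' t h1 h2 h3; apply: denseI; first exact: open_Oinf.
    exact: dense_Oinf.
  apply: denseI; [exact: open_Oinf|exact: dense_Oinf|exact: dense_Oinf].
have open3 : forall s s' t, open (Oinf le RR t `&` (Oinf le RR s `&` Oinf le RR s')).
  by move=> s s' t; apply: openI; [exact: open_Oinf|apply: openI; exact: open_Oinf].
split.
  move=> r r' s s' t h h' ht.
  have [hs As] := bd_parts h; have [hs' As'] := bd_parts h'; have [htt At] := bd_parts ht.
  exists (Oinf le RR t `&` (Oinf le RR s `&` Oinf le RR s')); split.
  - exact: open3.
  - exact: dense3.
  - by move=> c [c1 c2].
  move=> c [c1 [c2 c3]] /=.
  have [Avs _] := pos_v hs; have [Avs' _] := pos_v hs'; have [Avt _] := pos_v htt.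
  have T0 := Oinf_pos hs c2; have S0 := Oinf_pos hs' c3; have U0 := Oinf_pos htt c1.
  rewrite !gelE //.
  have E : (r + r') * finv t * (finv s * finv s') =
    finv t * ((r * finv s) * finv s' + (r' * finv s') * finv s) by ring.
  have hf := psi_rhom c.
  have := congr1 (psi c) E.
  rewrite (rhM hf At (AM Avs Avs')) (rhM hf Avs Avs') (rhM hf Avt (AD (AM As Avs') (AM As' Avs))).
  rewrite (rhD hf (AM As Avs') (AM As' Avs)) (rhM hf As Avs') (rhM hf As' Avs).
  set P1 := psi c ((r + r') * finv t); set P2 := psi c (finv s); set P3 := psi c (finv s').
  move=> EE.
  have eX : P1 = psi c (finv t) * (psi c (r * finv s) * P3 + psi c (r' * finv s') * P2) / (P2 * P3).
    by rewrite -EE mulfK // mulf_neq0 // gt_eqF.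
  rewrite eX; field.
  by rewrite !gt_eqF.
split.
  move=> r r' s s' t h h' ht.
  have [hs As] := bd_parts h; have [hs' As'] := bd_parts h'; have [htt At] := bd_parts ht.
  exists (Oinf le RR t `&` (Oinf le RR s `&` Oinf le RR s')); split.
  - exact: open3.
  - exact: dense3.
  - by move=> c [c1 c2].
  move=> c [c1 [c2 c3]] /=.
  have [Avs _] := pos_v hs; have [Avs' _] := pos_v hs'; have [Avt _] := pos_v htt.
  have T0 := Oinf_pos hs c2; have S0 := Oinf_pos hs' c3; have U0 := Oinf_pos htt c1.
  rewrite !gelE //.
  have E : (r * r') * finv t * (finv s * finv s') =
    finv t * ((r * finv s) * (r' * finv s')) by ring.
  have hf := psi_rhom c.
  have := congr1 (psi c) E.
  rewrite (rhM hf At (AM Avs Avs')) (rhM hf Avs Avs') (rhM hf Avt (AM As As')) (rhM hf As As').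
  set P1 := psi c ((r * r') * finv t); set P2 := psi c (finv s); set P3 := psi c (finv s').
  move=> EE.
  have eX : P1 = psi c (finv t) * (psi c (r * finv s) * psi c (r' * finv s')) / (P2 * P3).
    by rewrite -EE mulfK // mulf_neq0 // gt_eqF.
  rewrite eX; field.
  by rewrite !gt_eqF.
split.
  move=> t ht; have [htt _] := bd_parts ht.
  exists (Oinf le RR t); split.
  - exact: open_Oinf.
  - exact: dense_Oinf.
  - by move=> c c1.
  move=> c c1; by rewrite /gel mulVf // gt_eqF.
split.
  move=> r s h hr; have [hs As] := bd_parts h.
  exists (Oinf le RR s); split.
  - exact: open_Oinf.
  - exact: dense_Oinf.
  - by move=> c c1.
  move=> c c1; rewrite gelE //.
  have [Avs pvs] := pos_v hs.
  apply: mulr_ge0; first by rewrite invr_ge0 ltW // Oinf_pos.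
  apply: (rhpos (psi_rhom c)) => //; exact: posM.
move=> r s h [U [oU dU sU hU]].
have [hs As] := bd_parts h.
apply: contrapT => nr.
have [Avs pvs] := pos_v hs.
set v := finv s in Avs pvs As.
have Ag : A (- (r * v * v)) by apply: AN; apply: AM.
have ng : ~ pos (- - (r * v * v)).
  rewrite opprK => hp; apply: nr.
  have -> : r = (r * v * v) * (s * s).
    by transitivity (r * (s * v) * (s * v)); [rewrite /v loc_inv // !mulr1|ring].
  by apply: posM hp _; apply: posM; exact: pos_loc.
have [phi [hphi hpos]] := key Ag ng.
set c := mkX hphi.
have hc : 0 < psi c (- (r * v * v)) by [].
rewrite (rhN (psi_rhom c) (AM As Avs)) (rhM (psi_rhom c) As Avs) in hc.
have hv0 := rhpos (psi_rhom c) Avs pvs.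
have [hv hrv] : 0 < psi c v /\ 0 < - psi c (r * v).
  have h2 : 0 < - psi c (r * v) * psi c v by rewrite mulNr.
  exact: prod_pos h2 hv0.
pose V := Oinf le RR s `&` [set d : X | set_val d (r, s) < 0].
have oV : open V.
  apply: openI; first exact: open_Oinf.
  have -> : [set d : X | set_val d (r, s) < 0] = (fun d : X => set_val d (r, s)) @^-1` [set x | x < 0] by [].
  by apply: open_comp; [move=> d _; exact: ev_cont|exact: open_lt].
have Vc : V c.
  split; first by rewrite /Oinf /= (Oinf_psi c hs).
  by rewrite /= ev_bd //= -/v; rewrite oppr_gt0 in hrv.
have [d [Vd Ud]] := dU V (ex_intro _ c Vc) oV.
have := hU d Ud; rewrite /gel.
case: Vd => d1 d2.
have := d1; rewrite /Oinf /= => d1'.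
rewrite pmulr_rge0 ?invr_gt0 // => d3.
have d2' : set_val d (r, s) < 0 := d2. lra.
Qed.

End Alg.

Unset Implicit Arguments.

Theorem theorem39 (F : comPzRingType) (le : F -> F -> Prop) (RR : realType) :
  po_field le -> archimedean le ->
  localizable le /\
  (forall r s : F, bd le (r, s) ->
     cae_elem (Oinf le RR s) (gel le RR r s)) /\
  (forall r r' s s' t : F, bd le (r, s) -> bd le (r', s') -> bd le (r + r', t) ->
     cae_eq (Oinf le RR t) (gel le RR (r + r') t)
            (Oinf le RR s `&` Oinf le RR s') (gel le RR r s \+ gel le RR r' s')) /\
  (forall r r' s s' t : F, bd le (r, s) -> bd le (r', s') -> bd le (r * r', t) ->
     cae_eq (Oinf le RR t) (gel le RR (r * r') t)
            (Oinf le RR s `&` Oinf le RR s') (gel le RR r s \* gel le RR r' s')) /\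
  (forall t : F, bd le (1, t) ->
     cae_eq (Oinf le RR t) (gel le RR 1 t) setT (fun _ => 1)) /\
  (forall r s : F, bd le (r, s) -> le 0 r ->
     cae_le setT (fun _ => 0) (Oinf le RR s) (gel le RR r s)) /\
  (forall r s : F, bd le (r, s) ->
     cae_le setT (fun _ => 0) (Oinf le RR s) (gel le RR r s) -> le 0 r).
Proof. move=> Hpo Harch; exact: (@main_thm F le Hpo RR Harch). Qed.
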